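(* Let $R$ be an integral domain and $B=R[X_1,\dots,X_n]$ the polynomial ring with standard grading $B=\bigoplus_{i\ge0}B_i$ ($B_i$ the homogeneous polynomials of degree $i$, $B_0=R$). Let $A$ be a graded $R$-subalgebra of $B$ (i.e. $A=\bigoplus_{i\ge 0}(A\cap B_i)$), and suppose there is a retraction $\pi:B\to A$ with $\pi(B_+)\subseteq B_+$, where $B_+=\bigoplus_{i\ge1}B_i$. Then there is a finitely generated projective $R$-submodule $M$ of the free module $B_1=RX_1\oplus\cdots\oplus RX_n$ (namely a direct summand of $B_1$) such that $A$ is the $R$-subalgebra of $B$ generated by $M$ and $A\cong\operatorname{Sym}_R(M)$.
   Context: A retraction $\pi:B\to A$ is a ring homomorphism onto the subring $A$ which restricts to the identity on $A$ (equivalently an idempotent endomorphism of $B$ with image $A$); $\pi$ need not be graded. *)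

(* Defs.v *)
From HB Require Import structures.
From mathcomp Require Import all_boot all_algebra.
From mathcomp Require Import mpoly.
Set Implicit Arguments. Unset Strict Implicit. Unset Printing Implicit Defensive.
Import GRing.Theory.
Local Open Scope ring_scope.

Section Defs.
Variables (R : idomainType) (n : nat).
Local Notation B := {mpoly R[n]}.

(* S is an R-subalgebra of B: contains R = B_0 (constants), closed under + and *.
   (Closure under -, and R-scaling, follows: -p = (-1)%:MP * p, c *: p = c%:MP * p.) *)
Definition is_subalg (S : B -> Prop) : Prop :=
  (forall c : R, S c%:MP) /\
  (forall p q, S p -> S q -> S (p + q)) /\
  (forall p q, S p -> S q -> S (p * q)).

Definition homog_comp (d : nat) (p : B) : B :=
  \sum_(m <- msupp p | mdeg m == d) p@_m *: 'X_[m].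

(* S is graded: S = (+)_i (S cap B_i), i.e. homogeneous components of elements of S lie in S. *)
Definition is_graded (S : B -> Prop) : Prop :=
  forall (p : B) (d : nat), S p -> S (homog_comp d p).

Definition B_plus (p : B) : Prop := p@_(0%MM) = 0.

Definition is_submodule (S : B -> Prop) : Prop :=
  S 0 /\ (forall p q, S p -> S q -> S (p + q)) /\ (forall (c : R) p, S p -> S (c *: p)).

Definition direct_summand_B1 (M : B -> Prop) : Prop :=
  is_submodule M /\ (forall p, M p -> p \is 1.-homog) /\
  exists N : B -> Prop,
    is_submodule N /\ (forall p, N p -> p \is 1.-homog) /\
    (forall p, M p -> N p -> p = 0) /\
    (forall p, p \is 1.-homog -> exists u v, M u /\ N v /\ p = u + v).

Definition fin_gen_module (M : B -> Prop) : Prop :=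
  exists s : seq B, (forall x, x \in s -> M x) /\
    (forall p, M p -> exists c : 'I_(size s) -> R, p = \sum_(i < size s) c i *: s`_i).

Definition gen_subalg (M : B -> Prop) (p : B) : Prop :=
  forall S : B -> Prop, is_subalg S -> (forall m, M m -> S m) -> S p.

Definition alg_hom_on (A : B -> Prop) (C : comAlgType R) (g : B -> C) : Prop :=
  g 1 = 1 /\
  (forall a b, A a -> A b -> g (a + b) = g a + g b) /\
  (forall a b, A a -> A b -> g (a * b) = g a * g b) /\
  (forall (c : R) a, A a -> g (c *: a) = c *: g a).

(* (A, inclusion M -> A) is a symmetric algebra Sym_R(M): universal property
   w.r.t. R-linear maps from M into commutative R-algebras. This characterizes
   A ≅ Sym_R(M) via the canonical map Sym_R(M) -> A induced by M ⊆ A. *)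
Definition is_sym_alg_of (A M : B -> Prop) : Prop :=
  (forall m, M m -> A m) /\
  forall (C : comAlgType R) (f : B -> C),
    (forall u v, M u -> M v -> f (u + v) = f u + f v) ->
    (forall (c : R) u, M u -> f (c *: u) = c *: f u) ->
    exists g : B -> C,
      alg_hom_on A g /\ (forall u, M u -> g u = f u) /\
      (forall g' : B -> C, alg_hom_on A g' -> (forall u, M u -> g' u = f u) ->
         forall a, A a -> g' a = g a).

End Defs.

(* Main.v *)
Require Import Defs.
From HB Require Import structures.
From mathcomp Require Import all_boot all_algebra.
From mathcomp Require Import mpoly.
Set Implicit Arguments. Unset Strict Implicit. Unset Printing Implicit Defensive.
Import GRing.Theory.
Local Open Scope ring_scope.

Lemma hc_coef (R : idomainType) (n : nat) d (p : {mpoly R[n]}) m :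
  (homog_comp d p)@_m = if mdeg m == d then p@_m else 0.
Proof.
rewrite /homog_comp raddf_sum /=.
under eq_bigr do rewrite mcoeffZ mcoeffX.
case: (boolP (m \in msupp p)) => mp.
  rewrite big_mkcond (bigD1_seq m) ?msupp_uniq //= eqxx mulr1 big1 ?addr0 //.
  move=> j jm; case: ifP => // _.
  by rewrite (negbTE jm) mulr0.
rewrite big1_seq; first by case: ifP => // _; rewrite (memN_msupp_eq0 mp).
move=> j /andP[_ jp]; case: eqP => [ejm|]; last by rewrite mulr0.
by subst j; rewrite jp in mp.
Qed.

Definition ge_ord (R : idomainType) (n : nat) (k : nat) (p : {mpoly R[n]}) :=
  forall m, m \in msupp p -> (k <= mdeg m)%N.

Lemma ge0 (R : idomainType) (n : nat) k : ge_ord k (0 : {mpoly R[n]}).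
Proof. by move=> m; rewrite msupp0. Qed.

Lemma geD (R : idomainType) (n : nat) k (p q : {mpoly R[n]}) :
  ge_ord k p -> ge_ord k q -> ge_ord k (p + q).
Proof. by move=> hp hq m /msuppD_le; rewrite mem_cat => /orP[/hp|/hq]. Qed.

Lemma geB (R : idomainType) (n : nat) k (p q : {mpoly R[n]}) :
  ge_ord k p -> ge_ord k q -> ge_ord k (p - q).
Proof. by move=> hp hq m /msuppB_le; rewrite mem_cat => /orP[/hp|/hq]. Qed.

Lemma geZ (R : idomainType) (n : nat) k c (p : {mpoly R[n]}) :
  ge_ord k p -> ge_ord k (c *: p).
Proof. by move=> hp m /msuppZ_le /hp. Qed.

Lemma geW (R : idomainType) (n : nat) k k' (p : {mpoly R[n]}) :
  (k <= k')%N -> ge_ord k' p -> ge_ord k p.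
Proof. by move=> kk hp m /hp; apply: leq_trans. Qed.

Lemma geM (R : idomainType) (n : nat) k k' (p q : {mpoly R[n]}) :
  ge_ord k p -> ge_ord k' q -> ge_ord (k + k') (p * q).
Proof.
move=> hp hq m /msuppM_le /allpairsP [[m1 m2] /= [h1 h2 ->]].
by rewrite mdegD leq_add // ?hp ?hq.
Qed.

Lemma homog_ge (R : idomainType) (n : nat) d (p : {mpoly R[n]}) :
  p \is d.-homog -> ge_ord d p.
Proof. by move=> /dhomogP hp m /hp ->. Qed.

Lemma hc_ge0 (R : idomainType) (n : nat) d (p : {mpoly R[n]}) :
  ge_ord d.+1 p -> homog_comp d p = 0.
Proof.
move=> hp; apply/mpolyP => m; rewrite hc_coef mcoeff0.
case: eqP => // hd; case: (boolP (m \in msupp p)) => [/hp|/memN_msupp_eq0 //].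
by rewrite hd ltnn.
Qed.

Lemma hc_homog (R : idomainType) (n : nat) d (p : {mpoly R[n]}) :
  homog_comp d p \is d.-homog.
Proof. exact: pihomogP. Qed.

Lemma hc_id (R : idomainType) (n : nat) d (p : {mpoly R[n]}) :
  p \is d.-homog -> homog_comp d p = p.
Proof. exact: pihomog_dE. Qed.

Lemma hcD (R : idomainType) (n : nat) d (p q : {mpoly R[n]}) :
  homog_comp d (p + q) = homog_comp d p + homog_comp d q.
Proof. exact: pihomogD. Qed.

Lemma hcZ (R : idomainType) (n : nat) d c (p : {mpoly R[n]}) :
  homog_comp d (c *: p) = c *: homog_comp d p.
Proof.
change (pihomog mdeg d (c *: p) = c *: pihomog mdeg d p).
by rewrite linearZ.
Qed.

Definition approx (R : idomainType) (n : nat) d (q l : {mpoly R[n]}) :=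
  l \is d.-homog /\ ge_ord d.+1 (q - l).

Lemma approx_hc (R : idomainType) (n : nat) d (q l : {mpoly R[n]}) :
  approx d q l -> homog_comp d q = l.
Proof.
move=> [hl hge]; have -> : q = l + (q - l) by rewrite addrC subrK.
by rewrite hcD hc_id // hc_ge0 // addr0.
Qed.

Lemma approxM (R : idomainType) (n : nat) d e (q l q' l' : {mpoly R[n]}) :
  approx d q l -> approx e q' l' -> approx (d + e) (q * q') (l * l').
Proof.
move=> [hl hq] [hl' hq']; split; first exact: dhomogM.
have -> : q * q' - l * l' = (q - l) * q' + l * (q' - l').
  by rewrite mulrBl mulrBr addrA subrK.
apply: geD.
  have -> : (d + e).+1 = (d.+1 + e)%N by [].
  apply: geM => //.
  have -> : q' = l' + (q' - l') by rewrite addrC subrK.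
  apply: geD; first exact: homog_ge.
  by apply: geW hq'.
by rewrite -addnS; apply: geM => //; apply: homog_ge.
Qed.

Lemma approx1 (R : idomainType) (n : nat) : approx 0 (1 : {mpoly R[n]}) 1.
Proof. by split; [exact: dhomog1 | rewrite subrr; exact: ge0]. Qed.

Lemma approxX (R : idomainType) (n : nat) d (q l : {mpoly R[n]}) k :
  approx d q l -> approx (d * k) (q ^+ k) (l ^+ k).
Proof.
move=> h; elim: k => [|k ih]; first by rewrite muln0 !expr0; exact: approx1.
by rewrite !exprS mulnS; apply: approxM.
Qed.

Definition Lp (R : idomainType) (n : nat) (pi : {mpoly R[n]} -> {mpoly R[n]}) p :=
  homog_comp 1 (pi p).

Definition Lam (R : idomainType) (n : nat) (pi : {mpoly R[n]} -> {mpoly R[n]}) :=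
  mmap (@mpolyC n R) (fun i => Lp pi 'X_i).

Lemma hc_sum (R : idomainType) (n : nat) d (I : Type) (r : seq I) P (F : I -> {mpoly R[n]}) :
  homog_comp d (\sum_(i <- r | P i) F i) = \sum_(i <- r | P i) homog_comp d (F i).
Proof.
change (pihomog mdeg d (\sum_(i <- r | P i) F i) = \sum_(i <- r | P i) pihomog mdeg d (F i)).
by rewrite raddf_sum.
Qed.

Lemma piC (R : idomainType) (n : nat) (A : {mpoly R[n]} -> Prop)
    (pi : {rmorphism {mpoly R[n]} -> {mpoly R[n]}}) c :
  is_subalg A -> (forall a, A a -> pi a = a) -> pi c%:MP = c%:MP.
Proof. by move=> [hC _] hfix; apply: hfix. Qed.

Lemma piZ (R : idomainType) (n : nat) (A : {mpoly R[n]} -> Prop)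
    (pi : {rmorphism {mpoly R[n]} -> {mpoly R[n]}}) c p :
  is_subalg A -> (forall a, A a -> pi a = a) -> pi (c *: p) = c *: pi p.
Proof. by move=> hA hfix; rewrite -mul_mpolyC rmorphM (piC c hA hfix) mul_mpolyC. Qed.

Lemma approx_Xi (R : idomainType) (n : nat)
    (pi : {rmorphism {mpoly R[n]} -> {mpoly R[n]}}) i :
  (forall p, B_plus p -> B_plus (pi p)) -> approx 1 (pi 'X_i) (Lp pi 'X_i).
Proof.
move=> hBp; have h0 : (pi 'X_i)@_0%MM = 0.
  apply: hBp; rewrite /B_plus mcoeffX; case: eqP => // e.
  by have := mdeg1 i; rewrite e mdeg0.
split; first exact: hc_homog.
move=> m; rewrite mcoeff_msupp mcoeffB /Lp hc_coef.
case: (ltnP 1 (mdeg m)) => // hm.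
case: (mdeg m =P 1%N) => [_|]; first by rewrite subrr eqxx.
move=> hm1; have : mdeg m == 0%N by case: (mdeg m) hm hm1 => [|[|]].
by rewrite mdeg_eq0 => /eqP ->; rewrite h0 subr0 eqxx.
Qed.

Lemma approx_prod (R : idomainType) (n : nat) (I : Type) (r : seq I)
   (ds : I -> nat) (qs ls : I -> {mpoly R[n]}) :
  (forall i, approx (ds i) (qs i) (ls i)) ->
  approx (\sum_(i <- r) ds i) (\prod_(i <- r) qs i) (\prod_(i <- r) ls i).
Proof.
move=> h; elim: r => [|i r ih]; first by rewrite !big_nil; exact: approx1.
by rewrite !big_cons; apply: approxM.
Qed.

Lemma approx_mon (R : idomainType) (n : nat)
    (pi : {rmorphism {mpoly R[n]} -> {mpoly R[n]}}) m :
  (forall p, B_plus p -> B_plus (pi p)) ->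
  approx (mdeg m) (pi 'X_[m]) (Lam pi 'X_[m]).
Proof.
move=> hBp; rewrite /Lam mmapX /mmap1 mpolyXE_id rmorph_prod mdegE.
apply: approx_prod => i; rewrite rmorphXn.
by have := approxX (m i) (approx_Xi i hBp); rewrite mul1n.
Qed.

Lemma LamZ (R : idomainType) (n : nat) (pi : {mpoly R[n]} -> {mpoly R[n]}) c p :
  Lam pi (c *: p) = c *: Lam pi p.
Proof. by rewrite /Lam mmapZ mul_mpolyC. Qed.

Lemma key_homog (R : idomainType) (n : nat) (A : {mpoly R[n]} -> Prop)
    (pi : {rmorphism {mpoly R[n]} -> {mpoly R[n]}}) d p :
  is_subalg A -> (forall a, A a -> pi a = a) ->
  (forall p, B_plus p -> B_plus (pi p)) ->
  p \is d.-homog -> homog_comp d (pi p) = Lam pi p.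
Proof.
move=> hA hfix hBp /dhomogP hp.
rewrite [p]mpolyE rmorph_sum hc_sum /Lam raddf_sum /=.
apply: eq_big_seq => m /hp hm.
rewrite (piZ _ _ hA hfix) hcZ -hm (approx_hc (approx_mon m hBp)).
by rewrite -(LamZ pi).
Qed.

Lemma Lam_A (R : idomainType) (n : nat) (A : {mpoly R[n]} -> Prop)
    (pi : {rmorphism {mpoly R[n]} -> {mpoly R[n]}}) a :
  is_subalg A -> is_graded A -> (forall a, A a -> pi a = a) ->
  (forall p, B_plus p -> B_plus (pi p)) ->
  A a -> Lam pi a = a.
Proof.
move=> hA hG hfix hBp Aa.
set k := mmeasure mdeg a.
have hE : a = \sum_(d < k) pihomog mdeg d a := pihomog_partitionE (leqnn k).
transitivity (Lam pi (\sum_(d < k) pihomog mdeg d a)); first by rewrite -hE.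
rewrite [RHS]hE /Lam raddf_sum /=; apply: eq_bigr => d _.
have hd : A (homog_comp d a) by apply: hG.
rewrite -[LHS]/(Lam pi (homog_comp d a)) -(key_homog hA hfix hBp (hc_homog d a)).
by rewrite hfix // hc_id // hc_homog.
Qed.

Lemma homog1E (R : idomainType) (n : nat) (p : {mpoly R[n]}) :
  p \is 1.-homog -> p = \sum_(i < n) p@_U_(i) *: 'X_i.
Proof.
move=> hp; apply/mpolyP => m; rewrite raddf_sum /=.
under eq_bigr do rewrite mcoeffZ mcoeffX.
case: (boolP (mdeg m == 1%N)) => [/mdeg1P [i /eqP ->]|hm].
  rewrite (bigD1 i) //= eqxx mulr1 big1 ?addr0 // => j ji.
  by rewrite eq_mnm1 (negbTE ji) mulr0.
rewrite (dhomog_nemf_coeff hp hm) big1 // => j _.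
case: eqP => [e|]; last by rewrite mulr0.
by move: hm; rewrite -e mdeg1.
Qed.

Lemma sa0 (R : idomainType) (n : nat) (S : {mpoly R[n]} -> Prop) :
  is_subalg S -> S 0.
Proof. by move=> [hC _]; have := hC 0; rewrite mpolyC0. Qed.

Lemma sa1 (R : idomainType) (n : nat) (S : {mpoly R[n]} -> Prop) :
  is_subalg S -> S 1.
Proof. by move=> [hC _]; have := hC 1; rewrite mpolyC1. Qed.

Lemma sa_sum (R : idomainType) (n : nat) (S : {mpoly R[n]} -> Prop) (I : Type)
    (r : seq I) (F : I -> {mpoly R[n]}) :
  is_subalg S -> (forall i, S (F i)) -> S (\sum_(i <- r) F i).
Proof.
move=> hS hF; elim: r => [|i r ih]; first by rewrite big_nil; exact: sa0.
by rewrite big_cons; case: hS => _ [hD _]; apply: hD.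
Qed.

Lemma sa_prod (R : idomainType) (n : nat) (S : {mpoly R[n]} -> Prop) (I : Type)
    (r : seq I) (F : I -> {mpoly R[n]}) :
  is_subalg S -> (forall i, S (F i)) -> S (\prod_(i <- r) F i).
Proof.
move=> hS hF; elim: r => [|i r ih]; first by rewrite big_nil; exact: sa1.
by rewrite big_cons; case: hS => _ [_ hM]; apply: hM.
Qed.

Lemma sa_exp (R : idomainType) (n : nat) (S : {mpoly R[n]} -> Prop) p k :
  is_subalg S -> S p -> S (p ^+ k).
Proof.
move=> hS hp; elim: k => [|k ih]; first by rewrite expr0; exact: sa1.
by rewrite exprS; case: hS => _ [_ hM]; apply: hM.
Qed.

Lemma sa_Lam (R : idomainType) (n : nat) (S : {mpoly R[n]} -> Prop)
   (pi : {mpoly R[n]} -> {mpoly R[n]}) q :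
  is_subalg S -> (forall i, S (Lp pi 'X_i)) -> S (Lam pi q).
Proof.
move=> hS hX; rewrite /Lam /mmap; apply: sa_sum => // m.
case: (hS) => hC [_ hM]; apply: hM => //; apply: sa_prod => // i.
exact: sa_exp.
Qed.

Lemma hom0 (R : idomainType) (n : nat) (A : {mpoly R[n]} -> Prop) (C : comAlgType R) (g : {mpoly R[n]} -> C) :
  is_subalg A -> alg_hom_on A g -> g 0 = 0.
Proof.
move=> hA [g1 [_ [_ gZ]]]; have := gZ 0 1 (sa1 hA).
by rewrite !scale0r.
Qed.

Lemma hom_sum (R : idomainType) (n : nat) (A : {mpoly R[n]} -> Prop) (C : comAlgType R) (g : {mpoly R[n]} -> C)
    (I : Type) (r : seq I) (F : I -> {mpoly R[n]}) :
  is_subalg A -> alg_hom_on A g -> (forall i, A (F i)) ->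
  g (\sum_(i <- r) F i) = \sum_(i <- r) g (F i).
Proof.
move=> hA hg hF; elim: r => [|i r ih]; first by rewrite !big_nil; exact: hom0 hA hg.
rewrite !big_cons; case: (hg) => _ [gD _]; rewrite gD ?ih //.
exact: sa_sum.
Qed.

Lemma hom_prod (R : idomainType) (n : nat) (A : {mpoly R[n]} -> Prop) (C : comAlgType R) (g : {mpoly R[n]} -> C)
    (I : Type) (r : seq I) (F : I -> {mpoly R[n]}) :
  is_subalg A -> alg_hom_on A g -> (forall i, A (F i)) ->
  g (\prod_(i <- r) F i) = \prod_(i <- r) g (F i).
Proof.
move=> hA hg hF; elim: r => [|i r ih]; first by rewrite !big_nil; case: hg.
rewrite !big_cons; case: (hg) => _ [_ [gM _]]; rewrite gM ?ih //.
exact: sa_prod.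
Qed.

Lemma hom_exp (R : idomainType) (n : nat) (A : {mpoly R[n]} -> Prop) (C : comAlgType R) (g : {mpoly R[n]} -> C) p k :
  is_subalg A -> alg_hom_on A g -> A p -> g (p ^+ k) = g p ^+ k.
Proof.
move=> hA hg hp; elim: k => [|k ih]; first by rewrite !expr0; case: hg.
rewrite !exprS; case: (hg) => _ [_ [gM _]]; rewrite gM ?ih //.
exact: sa_exp.
Qed.

Lemma hom_Lam (R : idomainType) (n : nat) (A : {mpoly R[n]} -> Prop) (C : comAlgType R) (g : {mpoly R[n]} -> C)
   (pi : {mpoly R[n]} -> {mpoly R[n]}) q :
  is_subalg A -> alg_hom_on A g -> (forall i, A (Lp pi 'X_i)) ->
  g (Lam pi q) = mmap (in_alg C) (fun i => g (Lp pi 'X_i)) q.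
Proof.
move=> hA hg hX; rewrite /Lam /mmap (hom_sum _ hA hg); last first.
  move=> m; case: (hA) => hC [_ hM]; apply: hM => //; apply: sa_prod => // i.
  exact: sa_exp.
apply: eq_bigr => m _; case: (hg) => g1 [_ [gM gZ]].
rewrite gM; last 2 first.
- by case: hA.
- by apply: sa_prod => // i; apply: sa_exp.
rewrite (hom_prod _ hA hg); last by move=> i; apply: sa_exp.
congr (_ * _); last by apply: eq_bigr => i _; rewrite (hom_exp _ hA hg).
rewrite -[_%:MP]mulr1 mul_mpolyC gZ ?g1 //; exact: sa1.
Qed.

Theorem theorem5p13 (R : idomainType) (n : nat) (A : {mpoly R[n]} -> Prop)
    (pi : {rmorphism {mpoly R[n]} -> {mpoly R[n]}}) :
  is_subalg A -> is_graded A ->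
  (forall p, A (pi p)) -> (forall a, A a -> pi a = a) ->
  (forall p, B_plus p -> B_plus (pi p)) ->
  exists M : {mpoly R[n]} -> Prop,
    direct_summand_B1 M /\ fin_gen_module M /\
    (forall p, A p <-> gen_subalg M p) /\
    is_sym_alg_of A M.
Proof.
move=> hA hG hpiA hfix hBp.
have [hC [hD hM]] := hA.
have A0 : A 0 := sa0 hA.
have AZ : forall c p, A p -> A (c *: p).
  by move=> c p hp; rewrite -mul_mpolyC; apply: hM.
have LpD : forall p q, Lp pi (p + q) = Lp pi p + Lp pi q.
  by move=> p q; rewrite /Lp rmorphD hcD.
have LpZ : forall c p, Lp pi (c *: p) = c *: Lp pi p.
  by move=> c p; rewrite /Lp (piZ _ _ hA hfix) hcZ.
have LpA : forall p, A (Lp pi p) by move=> p; apply: hG.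
have LpH : forall p, Lp pi p \is 1.-homog by move=> p; apply: hc_homog.
have LpM : forall p, A p -> p \is 1.-homog -> Lp pi p = p.
  by move=> p Ap hp; rewrite /Lp hfix // hc_id.
have LpB : forall p q, Lp pi (p - q) = Lp pi p - Lp pi q.
  by move=> p q; rewrite /Lp rmorphB /homog_comp -/(pihomog mdeg 1 _) pihomogB.
have LamA : forall a, A a -> Lam pi a = a.
  by move=> a; apply: Lam_A.
have Lpsum : forall (r : seq 'I_n) (c : 'I_n -> R),
    Lp pi (\sum_(i <- r) c i *: 'X_i) = \sum_(i <- r) c i *: Lp pi 'X_i.
  move=> r c; elim: r => [|i r ih]; first by rewrite !big_nil /Lp rmorph0 /homog_comp msupp0 big_nil.
  by rewrite !big_cons LpD LpZ ih.
pose M p := A p /\ p \is 1.-homog.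
have Msub : is_submodule M.
  split; first by split => //; exact: dhomog0.
  split; first by move=> p q [ap hp] [aq hq]; split; [exact: hD | exact: dhomogD].
  by move=> c p [ap hp]; split; [exact: AZ | exact: dhomogZ].
exists M; split.
  split => //; split; first by move=> p [].
  exists (fun p => p \is 1.-homog /\ Lp pi p = 0); split.
    split; first by split; [exact: dhomog0 | rewrite /Lp rmorph0 /homog_comp msupp0 big_nil].
    split; first by move=> p q [hp lp] [hq lq]; split; [exact: dhomogD | rewrite LpD lp lq addr0].
    by move=> c p [hp lp]; split; [exact: dhomogZ | rewrite LpZ lp scaler0].
  split; first by move=> p [].
  split; first by move=> p [ap hp] [_ lp]; rewrite -(LpM p ap hp).
  move=> p hp; exists (Lp pi p), (p - Lp pi p); split; first by split.
  split; last by rewrite addrC subrK.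
  split; first by rewrite rpredB.
  by rewrite LpB (LpM (Lp pi p)) ?subrr.
split.
  exists [seq Lp pi 'X_i | i <- enum 'I_n]; split.
    by move=> x /mapP [i _ ->]; split.
  move=> p [ap hp]; rewrite size_map size_enum_ord.
  exists (fun i => p@_U_(i)).
  transitivity (Lp pi p); first by rewrite LpM.
  rewrite {1}(homog1E hp) Lpsum.
  by apply: eq_bigr => i _; rewrite (nth_map i) ?size_enum_ord // nth_ord_enum.
split.
  move=> p; split.
    move=> ap S hS hMS; rewrite -(LamA p ap); apply: sa_Lam => // i.
    by apply: hMS; split.
  by move=> hp; apply: hp => // m [].
split; first by move=> m [].
move=> C f fD fZ.
pose g := mmap (in_alg C) (fun i => f (Lp pi 'X_i)).
have ghom : alg_hom_on A g.
  split; first exact: rmorph1.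
  split; first by move=> a b _ _; exact: rmorphD.
  split; first by move=> a b _ _; exact: rmorphM.
  by move=> c a _; rewrite /g mmapZ mulr_algl.
have f0 : f 0 = 0.
  have h := fD 0 0 (proj1 Msub) (proj1 Msub); rewrite addr0 in h.
  by have := congr1 (fun x => x - f 0) h; rewrite addrK subrr.
have fsum : forall (r : seq 'I_n) (c : 'I_n -> R),
    f (\sum_(i <- r) c i *: Lp pi 'X_i) = \sum_(i <- r) c i *: f (Lp pi 'X_i)
    /\ M (\sum_(i <- r) c i *: Lp pi 'X_i).
  move=> r c; elim: r => [|i r [ih1 ih2]]; first by rewrite !big_nil f0; split => //; case: Msub.
  have hi : M (c i *: Lp pi 'X_i) by case: Msub => _ [_ hZ]; apply: hZ; split.
  rewrite !big_cons; split; first by rewrite fD // fZ ?ih1 //; split.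
  by case: Msub => _ [hD' _]; apply: hD'.
have gf : forall u, M u -> g u = f u.
  move=> u [au hu].
  have eu := homog1E hu.
  have -> : f u = f (\sum_(i < n) u@_U_(i) *: Lp pi 'X_i) by rewrite -Lpsum -eu LpM.
  rewrite (proj1 (fsum _ _)) {1}eu /g raddf_sum /=; apply: eq_bigr => i _.
  by rewrite /g mmapZ mmapX mmap1U mulr_algl.
exists g; split => //; split => //.
move=> g' hg' hg'f a aa.
rewrite -(LamA a aa) (hom_Lam _ hA hg') // (hom_Lam _ hA ghom) //.
rewrite /mmap; apply: eq_bigr => m _; congr (_ * _).
apply: eq_bigr => i _; rewrite hg'f ?gf //; by split.
Qed.
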